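(* Let $d\ge1$, $K>0$, $U$ a non-negative polynomial of degree $4$ with strictly positive leading coefficient, and let $\omega$ be a Borel probability measure on $\mathcal{X}=(\mathbb{R}^2)^{\mathbb{Z}^d}$ for which there is a constant $C_\omega>0$ such that, for all sufficiently small $\lambda>0$, $$\omega\bigl(e^{\lambda W_{\nu,k}}\bigr)\le e^{C_\omega(2k+1)^d}\qquad\forall\,\nu\in\mathbb{Z}^d,\ \forall\,k\in\mathbb{N}.$$ Then, for all sufficiently small $\lambda>0$, $$\lim_{N\to+\infty}e^{\lambda N}\,\omega(Q>N)=0;$$ in particular $\omega(\{x:Q(x)<\infty\})=1$.
   Context: Configurations are $x=\{(q_i,p_i)\}_{i\in\mathbb{Z}^d}$ with the product topology on $\mathcal{X}$; $|i-j|=\sum_\ell|i_\ell-j_\ell|$. For $\nu\in\mathbb{Z}^d$, $k\in\mathbb{N}$, $\Lambda_{\nu,k}$ is the cube of center $\nu$ and side $2k+1$, $W_{\nu,k}(x)=\sum_{i\in\Lambda_{\nu,k}}\{p_i^2/2+U(q_i)+1\}+\sum_{i,j\in\Lambda_{\nu,k},|j-i|=1}\frac K4(q_i-q_j)^2$, and $Q(x)=\sup_{\nu\in\mathbb{Z}^d}\sup_{k\in\mathbb{N},\,k>\log^{1/d}(e+|\nu|)}W_{\nu,k}(x)/(2k+1)^d$. *)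

(* Defs.v *)
From HB Require Import structures.
From mathcomp Require Import all_boot all_order all_algebra.
From mathcomp Require Import all_classical all_reals all_analysis.
Set Implicit Arguments. Unset Strict Implicit. Unset Printing Implicit Defensive.
Import Order.TTheory GRing.Theory Num.Theory.
Import numFieldTopology.Exports.
Local Open Scope classical_set_scope.
Local Open Scope ring_scope.

Definition site (d : nat) := 'I_d -> int.

Definition site_norm (d : nat) (i : site d) : nat := (\sum_(l < d) `|i l|%N)%N.

Definition config (R : realType) (d : nat) := site d -> (R * R)%type.

Definition qq (R : realType) (d : nat) (x : config R d) (i : site d) : R := (x i).1.
Definition pp (R : realType) (d : nat) (x : config R d) (i : site d) : R := (x i).2.

(* Generators of the product (= Borel, the product space being a countable
   product of copies of R^2) sigma-algebra: preimages of Borel subsets of R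
   under the coordinate maps q_i and p_i. *)
Definition coord_gen (R : realType) (d : nat) : set (set (config R d)) :=
  [set A | exists i : site d, exists B : set R, measurable B /\
     (A = [set x | B ((x i).1)] \/ A = [set x | B ((x i).2)])].

Definition X (R : realType) (d : nat) : measurableType _ := g_sigma_algebraType (@coord_gen R d).

(* the point of the cube Lambda_{nu,k} with offset a in {0..2k}^d *)
Definition cube_pt (d k : nat) (nu : site d) (a : {ffun 'I_d -> 'I_(2*k+1)}) : site d :=
  fun l => nu l + (a l)%:Z - k%:Z.

(* |i - j| for two cube offsets (same as for the corresponding sites) *)
Definition off_dist (d k : nat) (a b : {ffun 'I_d -> 'I_(2*k+1)}) : nat :=
  (\sum_(l < d) `|(a l)%:Z - (b l)%:Z|%N)%N.

Definition W (R : realType) (d : nat) (U : {poly R}) (K : R) (nu : site d) (k : nat)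
    (x : config R d) : R :=
  \sum_(a : {ffun 'I_d -> 'I_(2*k+1)})
      ((pp x (cube_pt nu a)) ^+ 2 / 2 + U.[qq x (cube_pt nu a)] + 1)
  + \sum_(a : {ffun 'I_d -> 'I_(2*k+1)}) \sum_(b : {ffun 'I_d -> 'I_(2*k+1)} | off_dist a b == 1%N)
      (K / 4 * (qq x (cube_pt nu a) - qq x (cube_pt nu b)) ^+ 2).

Definition Q (R : realType) (d : nat) (U : {poly R}) (K : R) (x : config R d) : \bar R :=
  ereal_sup [set r : \bar R | exists (nu : site d) (k : nat),
     (ln (expR (1 : R) + (site_norm nu)%:R)) `^ (d%:R^-1) < k%:R /\
     r = ((W U K nu k x) / ((2 * k + 1) ^ d)%:R)%:E].

(* Main.v *)
Require Import Defs.
From HB Require Import structures.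
From mathcomp Require Import all_boot all_order all_algebra.
From mathcomp Require Import all_classical all_reals all_analysis.
From mathcomp Require Import measurable_realfun measurable_fun_approximation.
Import Order.TTheory GRing.Theory Num.Theory.
Import numFieldTopology.Exports.
Local Open Scope classical_set_scope.
Local Open Scope ring_scope.
From mathcomp Require Import zify ring lra.

Definition adm (R : realType) (d k : nat) (nu : site d) : Prop :=
  (ln (expR (1 : R) + (site_norm nu)%:R)) `^ (d%:R^-1) < k%:R.

Definition Mk (R : realType) (d k : nat) : nat := Num.truncn (expR ((k ^ d)%:R : R)).

Lemma adm_bound (R : realType) (d k : nat) (nu : site d) : (1 <= d)%N ->
  adm R d k nu -> ((site_norm nu)%:R < expR ((k ^ d)%:R : R)) /\ (1 <= k)%N.
Proof.
move=> d1; rewrite /adm.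
set n := site_norm nu.
have e1 : (1 : R) < expR 1 + n%:R.
  by apply: (lt_le_trans (pexpR_gt1 ltr01)); rewrite lerDl.
set y := ln _.
have y0 : 0 < y by apply: ln_gt0.
have yE : y = (y `^ (d%:R^-1)) ^+ d.
  rewrite -powR_mulrn ?powR_ge0 // -powRrM mulVf ?powRr1 ?(ltW y0) //.
  by rewrite pnatr_eq0 -lt0n.
move=> hk.
have yk : y < (k ^ d)%:R.
  rewrite natrX yE ltrXn2r ?powR_ge0 //; by rewrite -lt0n.
split.
  apply: (lt_trans (y := expR 1 + n%:R)); first by rewrite ltrDr expR_gt0.
  rewrite -[X in X < _]lnK; first by rewrite ltr_expR.
  by rewrite posrE (lt_trans ltr01).
case: k hk yk => // _.
by rewrite exp0n ?ltr0n // => /(lt_trans y0); rewrite ltxx.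
Qed.

Lemma adm_cube (R : realType) (d k : nat) (nu : site d) : (1 <= d)%N ->
  adm R d k nu -> exists a : {ffun 'I_d -> 'I_(2 * Mk R d k + 1)},
    nu = @cube_pt d (Mk R d k) (fun=> 0) a.
Proof.
move=> d1 /(@adm_bound R d k nu d1) [hn _].
set M := Mk R d k.
have nM : (site_norm nu <= M)%N.
  by rewrite /M /Mk truncn_ge_nat ?expR_ge0 // ltW.
have hl l : (`|nu l| <= M)%N.
  apply: leq_trans nM; rewrite /site_norm (bigD1 l) //=; exact: leq_addr.
have e : (2 * M + 1 = (2 * M).+1)%N by rewrite addn1.
exists [ffun l => cast_ord (esym e) (inord (absz (nu l + M%:Z)))].
apply/funext => l; rewrite /cube_pt ffunE /= inordK; last first.
  have := hl l; lia.
have := hl l; lia.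
Qed.

Lemma mq (R : realType) (d : nat) (i : site d) :
  measurable_fun [set: X R d] (fun x : X R d => qq x i).
Proof.
move=> _ B mB; rewrite setTI; apply: sub_sigma_algebra.
by exists i, B; split => //; left.
Qed.

Lemma mp (R : realType) (d : nat) (i : site d) :
  measurable_fun [set: X R d] (fun x : X R d => pp x i).
Proof.
move=> _ B mB; rewrite setTI; apply: sub_sigma_algebra.
by exists i, B; split => //; right.
Qed.

Lemma mW (R : realType) (d : nat) (U : {poly R}) (K : R) (nu : site d) (k : nat) :
  measurable_fun [set: X R d] (fun x : X R d => W U K nu k x).
Proof.
rewrite /W.
apply: measurable_funD.
  apply: measurable_sum => a.
  apply: measurable_funD; last exact: measurable_cst.
  apply: measurable_funD.
    apply: measurable_funM; last exact: measurable_cst.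
    by apply: measurable_funX; exact: mp.
  apply: (measurableT_comp (f := horner U)); last exact: mq.
  by apply: continuous_measurable_fun; exact: continuous_horner.
apply: measurable_sum => a.
rewrite -/(fun x => _).
have -> : (fun x : X R d => \sum_(b | off_dist a b == 1%N)
      (K / 4 * (qq x (cube_pt nu a) - qq x (cube_pt nu b)) ^+ 2)) =
   (fun x => \sum_(b <- [seq b <- index_enum _ | off_dist a b == 1%N])
      (K / 4 * (qq x (cube_pt nu a) - qq x (cube_pt nu b)) ^+ 2)).
  by apply/funext => x; rewrite big_filter.
apply: measurable_sum => b.
apply: measurable_funM; first exact: measurable_cst.
apply: measurable_funX; apply: measurable_funB; exact: mq.
Qed.

Lemma mset_gt (R : realType) dd (T : measurableType dd) (f : T -> R) (t : R) :
  measurable_fun setT f -> measurable [set x | t < f x].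
Proof.
move=> mf; have := mf measurableT `]t, +oo[%classic (measurable_itv _).
rewrite setTI; congr measurable; apply/seteqP; split => x /=;
  by rewrite in_itv /= andbT.
Qed.

Lemma markovW (R : realType) dd (T : measurableType dd) (P : probability T R)
  (f : T -> R) (lam t : R) : 0 <= lam ->
  measurable_fun setT f ->
  ((expR (lam * t)%R)%:E * P [set x | (t < f x)%R] <= \int[P]_x (expR (lam * f x)%R)%:E)%E.
Proof.
move=> l0 mf; have mA := @mset_gt _ _ _ f t mf.
set A := [set x | t < f x] in mA *.
rewrite -(setIT A) -integral_indic //.
rewrite -(@integralZl_indic _ _ _ _ _ measurableT (fun=> A)) //; last first.
  move=> h; exfalso; move: h; rewrite ltNge expR_ge0 //.
apply: ge0_le_integral => //.
- apply/measurable_EFinP; apply: measurable_funM; first exact: measurable_cst.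
  exact: measurable_indic.
- apply/measurable_EFinP; apply: measurableT_comp; first exact: measurable_expR.
  apply: measurable_funM => //; exact: measurable_cst.
move=> x _; rewrite lee_fin /indic; case: (boolP (x \in A)) => xA.
  rewrite mulr1 ler_expR; rewrite inE in xA.
  by rewrite ler_wpM2l // ltW.
by rewrite mulr0 expR_ge0.
Qed.

Definition Sa (R : realType) (d : nat) (U : {poly R}) (K N : R) (k : nat)
  (a : {ffun 'I_d -> 'I_(2 * Mk R d k + 1)}) : set (X R d) :=
  [set x | N * ((2 * k + 1) ^ d)%:R < W U K (@cube_pt d (Mk R d k) (fun=> 0) a) k x].
Arguments Sa {R d} U K N {k} a.

Definition Ak (R : realType) (d : nat) (U : {poly R}) (K N : R) (k : nat) : set (X R d) :=
  \big[setU/set0]_(a | `[< adm R d k (@cube_pt d (Mk R d k) (fun=> 0) a) >])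
     Sa U K N a.
Arguments Ak {R d} U K N k.

Lemma Ak_meas (R : realType) (d : nat) (U : {poly R}) (K N : R) (k : nat) :
  measurable (@Ak R d U K N k).
Proof.
apply: bigsetU_measurable => a _; apply: mset_gt; exact: mW.
Qed.

Lemma EN_eq (R : realType) (d : nat) (U : {poly R}) (K N : R) : (1 <= d)%N ->
  [set x : X R d | (N%:E < Q U K x)%E] = \bigcup_k Ak U K N k.
Proof.
move=> d1; apply/seteqP; split => x /=.
  move=> /ereal_sup_gt [y [nu [k [hadm ->]]]].
  have T0 : 0 < ((2 * k + 1) ^ d)%:R :> R by rewrite ltr0n expn_gt0 addn1.
  rewrite lte_fin ltr_pdivlMr // => hW.
  have [a ha] := @adm_cube R d k nu d1 hadm.
  exists k => //; rewrite /Ak -bigcup_seq_cond.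
  exists a; first by rewrite /= mem_index_enum /=; apply/asboolP; rewrite -ha.
  by rewrite /Sa /= -ha.
move=> [k _]; rewrite /Ak -bigcup_seq_cond => -[a /= /andP [_ /asboolP hadm] hS].
apply: (lt_le_trans _ (ereal_sup_ubound _)); last first.
  by exists (@cube_pt d (Mk R d k) (fun=> 0) a), k; split; [exact: hadm|reflexivity].
have T0 : 0 < ((2 * k + 1) ^ d)%:R :> R by rewrite ltr0n expn_gt0 addn1.
by rewrite lte_fin ltr_pdivlMr.
Qed.

Lemma natT1 (d k : nat) : (1 <= d)%N -> (k ^ d + 1 <= (2 * k + 1) ^ d)%N.
Proof.
case: d => // d _; elim: d => [|d IH]; first by rewrite !expn1; lia.
rewrite (expnS k) (expnS (2 * k + 1)).
have h1 : (1 <= (2 * k + 1) ^ d.+1)%N by rewrite expn_gt0 addn1.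
nia.
Qed.

Lemma natT2 (d k : nat) : (1 <= d)%N -> (1 <= k)%N -> (k + 2 <= (2 * k + 1) ^ d)%N.
Proof.
case: d => // d _ k1; rewrite expnS.
have h1 : (1 <= (2 * k + 1) ^ d)%N by rewrite expn_gt0 addn1.
nia.
Qed.

Lemma expR1_ge2 (R : realType) : (2 : R) <= expR 1.
Proof. by have := @expR_ge1Dx R 1; rewrite (_ : 1 + 1 = 2) //. Qed.

Lemma expR_nat_ge (R : realType) (k : nat) : (2 : R) ^+ k <= expR k%:R.
Proof.
rewrite -[k%:R]mulr1 expRM_natl; apply: lerXn2r; rewrite ?nnegrE ?expR_ge0 //.
exact: expR1_ge2.
Qed.

Lemma num_bound (R : realType) (d k : nat) (C lam N : R) : (1 <= d)%N -> (1 <= k)%N ->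
  1 <= lam * N - C - 2 * d%:R ->
  ((2 * Mk R d k + 1) ^ d)%:R * expR ((C - lam * N) * ((2 * k + 1) ^ d)%:R)
  <= expR (- 2 * (lam * N - C - 2 * d%:R)) / 2 ^+ k.
Proof.
move=> d1 k1 hm.
set m := lam * N - C - 2 * d%:R in hm *.
set T := ((2 * k + 1) ^ d)%:R : R.
set E := expR ((k ^ d)%:R : R).
have E0 : 0 <= (k ^ d)%:R :> R by [].
have E1 : 1 <= E by have := @expR_ge1Dx R (k ^ d)%:R; rewrite /E; apply: le_trans; rewrite lerDl.
have ME : (Mk R d k)%:R <= E by rewrite /Mk /E truncn_le expR_ge0.
have h2M : ((2 * Mk R d k + 1)%:R : R) <= 3 * E.
  rewrite natrD natrM /=.
  have -> : 3 * E = 2 * E + E by ring.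
  by apply: lerD => //; rewrite ler_pM2l.
have e2 : (3 : R) <= expR 2.
  have -> : expR 2 = expR 1 ^+ 2 :> R by rewrite -expRM_natl mulr1.
  apply: le_trans (_ : (2 : R) ^+ 2 <= _); first by rewrite expr2 (_ : 2 * 2 = 4) //; lra.
  by apply: lerXn2r; rewrite ?nnegrE ?expR_ge0 //; exact: expR1_ge2.
have hpow : ((2 * Mk R d k + 1) ^ d)%:R <= expR (d%:R * ((k ^ d)%:R + 2) : R).
  rewrite natrX mulrC expRM_natr expRD.
  apply: le_trans (_ : (3 * E) ^+ d <= _).
    by apply: lerXn2r; rewrite ?nnegrE ?ler0n // mulr_ge0 // (le_trans ler01 E1).
  rewrite !exprMn [X in _ <= X]mulrC; apply: ler_pM => //.
  - by rewrite exprn_ge0 // (le_trans ler01 E1).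
  - by apply: lerXn2r; rewrite ?nnegrE ?expR_ge0.
have hT1 : (k ^ d)%:R + 1 <= T :> R.
  have -> : (k ^ d)%:R + 1 = (k ^ d + 1)%:R :> R by rewrite natrD.
  by rewrite /T ler_nat; exact: natT1.
have hT2 : k%:R + 2 <= T :> R.
  have -> : k%:R + 2 = (k + 2)%:R :> R by rewrite natrD.
  by rewrite /T ler_nat; exact: natT2.
have k0 : 0 <= k%:R :> R by [].
apply: le_trans (_ : expR (- 2 * m - k%:R) <= _).
  apply: le_trans (_ : expR (d%:R * ((k ^ d)%:R + 2)) * expR ((C - lam * N) * T) <= _).
    by rewrite ler_pM2r ?expR_gt0.
  rewrite -expRD ler_expR.
  have -> : C - lam * N = - m - 2 * d%:R by rewrite /m; ring.
  have d0 : 0 <= d%:R :> R by [].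
  nra.
rewrite expRB ler_pM2l ?expR_gt0 // lef_pV2 ?posrE ?expR_gt0 ?exprn_gt0 //.
exact: expR_nat_ge.
Qed.


Lemma mu_bigsetU_le dd (T : measurableType dd) (R : realType)
  (mu : {measure set T -> \bar R}) (I : Type) (s : seq I) (P : pred I)
  (F : I -> set T) : (forall i, measurable (F i)) ->
  (mu (\big[setU/set0]_(i <- s | P i) F i) <= \sum_(i <- s | P i) mu (F i))%E.
Proof.
move=> mF; elim: s => [|h s IH]; first by rewrite !big_nil measure0.
rewrite !big_cons; case: ifP => _ //.
apply: le_trans (measureU2 _ _ _) _ => //; first exact: bigsetU_measurable.
exact: leeD.
Qed.

Lemma Sa_bound (R : realType) (d : nat) (U : {poly R}) (K : R)
  (omega : probability (X R d) R) (C lam N : R) (k : nat)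
  (a : {ffun 'I_d -> 'I_(2 * Mk R d k + 1)}) : 0 < lam ->
  (forall (nu : site d) (k : nat),
       (\int[omega]_x (expR (lam * W U K nu k x))%:E <=
         (expR (C * ((2 * k + 1) ^ d)%:R))%:E)%E) ->
  (omega (Sa U K N a) <= (expR ((C - lam * N) * ((2 * k + 1) ^ d)%:R))%:E)%E.
Proof.
move=> l0 Hint.
set T := ((2 * k + 1) ^ d)%:R : R.
have := @markovW R _ _ omega _ lam (N * T) (ltW l0) (@mW R d U K (@cube_pt d (Mk R d k) (fun=> 0) a) k).
move=> /le_trans /(_ (Hint _ k)).
have p0 : (0 <= omega (Sa U K N a))%E by [].
have p1 : (omega (Sa U K N a) <= 1)%E by apply: probability_le1; apply: mset_gt; exact: (@mW R d).
rewrite -(@fineK _ (omega (Sa U K N a))); last by rewrite ge0_fin_numE // (le_lt_trans p1) // ltry.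
rewrite -EFinM !lee_fin => h.
have -> : (C - lam * N) * T = C * T - lam * (N * T) by ring.
by rewrite expRB ler_pdivlMr ?expR_gt0 // mulrC.
Qed.

Lemma Ak_bound (R : realType) (d : nat) (U : {poly R}) (K : R)
  (omega : probability (X R d) R) (C lam N : R) (k : nat) : 0 < lam ->
  (forall (nu : site d) (k : nat),
       (\int[omega]_x (expR (lam * W U K nu k x))%:E <=
         (expR (C * ((2 * k + 1) ^ d)%:R))%:E)%E) ->
  (omega (Ak U K N k) <=
     (((2 * Mk R d k + 1) ^ d)%:R * expR ((C - lam * N) * ((2 * k + 1) ^ d)%:R))%:E)%E.
Proof.
move=> l0 Hint; rewrite /Ak.
apply: le_trans; first apply: mu_bigsetU_le.
  by move=> a; apply: mset_gt; exact: (@mW R d).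
eapply le_trans.
  by apply: lee_sum => a _; apply: (@Sa_bound R d U K omega C lam N k a l0 Hint).
rewrite sumEFin lee_fin big_mkcond /=.
apply: le_trans (_ : \sum_(a : {ffun 'I_d -> 'I_(2 * Mk R d k + 1)})
   expR ((C - lam * N) * ((2 * k + 1) ^ d)%:R) <= _).
  by apply: ler_sum => a _; case: ifP => _ //; rewrite expR_ge0.
by rewrite sumr_const card_ffun !card_ord mulr_natl.
Qed.

Lemma Ak0 (R : realType) (d : nat) (U : {poly R}) (K : R)
  (N : R) : (1 <= d)%N ->
  @Ak R d U K N 0 = set0.
Proof.
move=> d1; rewrite /Ak big_pred0 // => a.
by apply/asboolP => /(@adm_bound R d 0 _ d1) [].
Qed.


Lemma EN_meas (R : realType) (d : nat) (U : {poly R}) (K N : R) : (1 <= d)%N ->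
  measurable [set x : X R d | (N%:E < Q U K x)%E].
Proof.
move=> d1; rewrite EN_eq //; apply: bigcupT_measurable => k; exact: Ak_meas.
Qed.

Lemma EN_bound (R : realType) (d : nat) (U : {poly R}) (K : R)
  (omega : probability (X R d) R) (C lam N : R) : (1 <= d)%N -> 0 < lam ->
  (forall (nu : site d) (k : nat),
       (\int[omega]_x (expR (lam * W U K nu k x))%:E <=
         (expR (C * ((2 * k + 1) ^ d)%:R))%:E)%E) ->
  1 <= lam * N - C - 2 * d%:R ->
  (omega [set x : X R d | (N%:E < Q U K x)%E] <=
     (2 * expR (- 2 * (lam * N - C - 2 * d%:R)))%:E)%E.
Proof.
move=> d1 l0 Hint hm.
set m := lam * N - C - 2 * d%:R in hm *.
rewrite EN_eq //.
apply: le_trans.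
  apply: (@measure_sigma_subadditive _ _ _ omega (\bigcup_k Ak U K N k)
     (fun k => @Ak R d U K N k)) => //.
  - by move=> k; exact: Ak_meas.
  - by apply: bigcupT_measurable => k; exact: Ak_meas.
apply: le_trans (epsilon_trick0 xpredT _); last first.
  by rewrite mulr_ge0 ?expR_ge0.
apply: lee_nneseries => // k _.
case: k => [|k]; first by rewrite Ak0 // measure0 lee_fin mulr_ge0 ?expR_ge0 ?invr_ge0.
apply: le_trans; first exact: (@Ak_bound R d U K omega C lam N k.+1 l0 Hint).
rewrite lee_fin.
apply: le_trans; first exact: (@num_bound R d k.+1 C lam N d1 isT hm).
rewrite -/m.
have -> : (2 ^ k.+2)%:R = 2 * 2 ^+ k.+1 :> R by rewrite natrX exprS.
have h2 : (2 : R) ^+ k.+1 != 0 by rewrite gt_eqF // exprn_gt0.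
by rewrite le_eqVlt; apply/orP; left; apply/eqP; field.
Qed.


Lemma fin_prob dd (T : measurableType dd) (R : realType) (P : probability T R)
  (A : set T) : measurable A -> P A \is a fin_num.
Proof.
move=> mA; rewrite ge0_fin_numE //.
by apply: le_lt_trans (probability_le1 _ mA) _; rewrite ltry.
Qed.

Lemma convQ (R : realType) (d : nat) (U : {poly R}) (K : R)
  (omega : probability (X R d) R) (C lam : R) : (1 <= d)%N -> 0 < lam -> 0 < C ->
  (forall (nu : site d) (k : nat),
       (\int[omega]_x (expR (lam * W U K nu k x))%:E <=
         (expR (C * ((2 * k + 1) ^ d)%:R))%:E)%E) ->
  (fun N : R => expR (lam * N) * fine (omega [set x | (N%:E < Q U K x)%E]))
        @ +oo --> 0.
Proof.
move=> d1 l0 C0 Hint.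
apply/cvgrPdist_le => eps e0.
set c := 2 * expR (2 * C + 4 * d%:R).
have c0 : 0 < c by rewrite mulr_gt0 ?expR_gt0.
near=> N.
have hN1 : (C + 2 * d%:R + 1) / lam < N.
  by near: N; apply: nbhs_pinfty_gt; rewrite num_real.
have hN2 : c / (lam * eps) < N.
  by near: N; apply: nbhs_pinfty_gt; rewrite num_real.
rewrite ltr_pdivrMr // mulrC in hN1.
rewrite ltr_pdivrMr ?mulr_gt0 // in hN2.
have d0 : 0 <= d%:R :> R by [].
have hm : 1 <= lam * N - C - 2 * d%:R by lra.
have hb := @EN_bound R d U K omega C lam N d1 l0 Hint hm.
set p := omega _ in hb *.
have pfin : p \is a fin_num by apply: fin_prob; exact: EN_meas.
have fp : fine p <= 2 * expR (- 2 * (lam * N - C - 2 * d%:R)).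
  by rewrite -lee_fin fineK.
have fp0 : 0 <= fine p.
  have hp : (0 <= p)%E by rewrite /p; exact: measure_ge0.
  by move: hp; case: (p) => // r; rewrite lee_fin.
rewrite sub0r normrN ger0_norm ?mulr_ge0 ?expR_ge0 //.
apply: le_trans (_ : expR (lam * N) * (2 * expR (- 2 * (lam * N - C - 2 * d%:R))) <= _).
  by rewrite ler_pM2l ?expR_gt0.
have -> : expR (lam * N) * (2 * expR (- 2 * (lam * N - C - 2 * d%:R)))
   = c * (expR (lam * N))^-1.
  have -> : c * (expR (lam * N))^-1 = 2 * expR (2 * C + 4 * d%:R - lam * N) by rewrite /c -mulrA -expRN -expRD.
  rewrite mulrCA -expRD; congr (_ * expR _); ring.
have lN : 0 < lam * N by lra.
apply: le_trans (_ : c * (lam * N)^-1 <= _).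
  rewrite ler_pM2l // lef_pV2 ?posrE ?expR_gt0 //.
  by apply: le_trans (expR_ge1Dx _); rewrite lerDr.
rewrite ler_pdivrMr //; lra.
Unshelve. all: by end_near.
Qed.


Theorem mainTheorem5 (R : realType) (d : nat) (K : R) (U : {poly R})
  (omega : probability (X R d) R) :
  (1 <= d)%N -> 0 < K ->
  size U = 5%N -> 0 < lead_coef U -> (forall r : R, 0 <= U.[r]) ->
  (exists C : R, 0 < C /\ exists lam0 : R, 0 < lam0 /\
     forall lam : R, 0 < lam -> lam <= lam0 ->
     forall (nu : site d) (k : nat),
       (\int[omega]_x (expR (lam * W U K nu k x))%:E <=
         (expR (C * ((2 * k + 1) ^ d)%:R))%:E)%E) ->
  exists lam0 : R, 0 < lam0 /\
    (forall lam : R, 0 < lam -> lam <= lam0 ->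
      (fun N : R => expR (lam * N) * fine (omega [set x | (N%:E < Q U K x)%E]))
        @ +oo --> 0)
    /\ omega [set x | (Q U K x < +oo)%E] = 1%E.
Proof.
move=> d1 _ _ _ _ [C [C0 [lam0 [l00 H]]]].
have cv lam : 0 < lam -> lam <= lam0 -> _ := fun l0 le => @convQ R d U K omega C lam d1 l0 C0 (H lam l0 le).
exists lam0; split => //; split; first exact: cv.
set B := \bigcap_n [set x : X R d | ((n%:R : R)%:E < Q U K x)%E].
have mB : measurable B by apply: bigcapT_measurable => n; exact: EN_meas.
have -> : [set x | (Q U K x < +oo)%E] = ~` B.
  apply/seteqP; split => x /=.
    move=> hQ hB; move: hQ.
    case hq : (Q U K x) => [r| |] //= _.
      have := hB (Num.truncn r).+1 I; rewrite /= hq lte_fin.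
      by move=> /(lt_trans (truncnS_gt r)); rewrite ltxx.
    by have := hB 0%N I; rewrite /= hq.
  move=> nB; rewrite ltNge leye_eq; apply/negP => /eqP hQ; apply: nB => n _.
  by rewrite /= hQ ltry.
rewrite probability_setC //.
suff -> : omega B = 0%E by rewrite sube0.
have bfin : omega B \is a fin_num by exact: fin_prob.
have b0 : (0 <= omega B)%E by exact: measure_ge0.
rewrite -(fineK bfin); congr (_%:E).
apply/eqP; rewrite eq_le fine_ge0 // andbT.
have hc := cv lam0 l00 (lexx _).
rewrite -(cvg_lim _ hc) //; apply: limr_ge; first exact: cvgP hc.
near=> N.
have N0 : 0 <= N by near: N; apply: nbhs_pinfty_ge; rewrite num_real.
have mE := @EN_meas R d U K N d1.
have hBE : B `<=` [set x | (N%:E < Q U K x)%E].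
  move=> x hB /=; apply: lt_trans (hB (Num.truncn N).+1 I).
  by rewrite lte_fin truncnS_gt.
have h1 : (omega B <= omega [set x | (N%:E < Q U K x)%E])%E.
  by apply: le_measure => //; rewrite inE.
have h2 : fine (omega B) <= fine (omega [set x | (N%:E < Q U K x)%E]).
  by apply: fine_le => //; exact: fin_prob.
apply: le_trans h2 _.
rewrite ler_peMl //.
  by apply: fine_ge0; exact: measure_ge0.
by rewrite -expR0 ler_expR mulr_ge0 // ltW.
Unshelve. all: by end_near.
Qed.
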